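(* Let $n\ge4$ and let $\mathcal{L}=\{\ell_1,\ldots,\ell_n\}$ be the set of lines of the matroid $L_n$. A partition $\mathcal{Q}=\{Q_1,\ldots,Q_k\}$ of $\mathcal{L}$ is nice if and only if $|Q_i|\notin\{2,3,n-1\}$ for every $i\in[k]$.
   Context: $L_n$ ($n\ge4$) is the rank-three paving matroid on the set of 2-element subsets of $[n]$ (the pairwise intersection points of $n$ general lines in $\mathbb{P}^2$) whose lines (dependent hyperplanes) are $\ell_i=\{\{i,j\}:j\ne i\}$, $i\in[n]$; circuits are 3-subsets of some $\ell_i$ and 4-subsets containing no such 3-subset. For a set $Q$ of at least two lines, $L_n^Q$ is the rank-three paving matroid on $\bigcup_{\ell\in Q}\ell$ whose set of lines is exactly $Q$. Circuit variety of a matroid $N$ on $E$: tuples $(\gamma_e)$ in $\mathbb{C}^3$ with $(\gamma_e)_{e\in S}$ linearly dependent for every dependent $S$. $N$ is liftable if for every tuple $(\gamma_e)$ in $\mathbb{C}^3$ spanning a plane $H$ and every $q\notin H$ there exist scalars $z_e$ with $(\gamma_e+z_eq)$ in the circuit variety of $N$ and not all in a common plane. A partition $\mathcal{Q}$ of $\mathcal{L}$ is nice if (i) $L_n^{Q_i}$ is not liftable for every $i$ with $|Q_i|\ge2$, and (ii) there is no $i$ and line $\ell\notin Q_i$ with $\ell\subseteq\bigcup_{\ell'\in Q_i}\ell'$. *)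

(* Defs.v *)
From mathcomp Require Import all_boot all_algebra.
From mathcomp Require Import complex.
From mathcomp Require Import Rstruct.
Set Implicit Arguments. Unset Strict Implicit. Unset Printing Implicit Defensive.
Import GRing.Theory.
Local Open Scope ring_scope.

Definition C := (Rdefinitions.R)[i].
Notation C3 := 'rV[C]_3.

Section PavingRank3.
Variable E : finType.

(* A rank-three paving matroid on the ground set G (a subset of E),
   given by its set of lines Ls (each a subset of G).
   Circuits: 3-subsets of some line, and 4-subsets containing no such 3-subset. *)
Definition in_some_line (Ls : {set {set E}}) (S : {set E}) : bool :=
  [exists L in Ls, S \subset L].

Definition pav3_circuit (G : {set E}) (Ls : {set {set E}}) (X : {set E}) : bool :=
  (X \subset G) &&
  (((#|X| == 3) && in_some_line Ls X) ||
   ((#|X| == 4) &&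
    [forall D : {set E}, ((D \subset X) && (#|D| == 3)) ==> ~~ in_some_line Ls D])).

Definition pav3_dependent (G : {set E}) (Ls : {set {set E}}) (S : {set E}) : bool :=
  (S \subset G) && [exists X : {set E}, (X \subset S) && pav3_circuit G Ls X].

Definition fam (gamma : E -> C3) (S : {set E}) : seq C3 := [seq gamma e | e <- enum S].

Definition in_circuit_variety (G : {set E}) (Ls : {set {set E}}) (gamma : E -> C3) : Prop :=
  forall S : {set E}, pav3_dependent G Ls S -> ~~ free (fam gamma S).

Definition liftable (G : {set E}) (Ls : {set {set E}}) : Prop :=
  forall gamma : E -> C3,
    \dim (span (fam gamma G)) = 2%N ->
    forall q : C3, q \notin span (fam gamma G) ->
      exists z : E -> C,
        in_circuit_variety G Ls (fun e => gamma e + z e *: q) /\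
        \dim (span (fam (fun e => gamma e + z e *: q) G)) = 3%N.

End PavingRank3.

(* The ground set of L_n: 2-element subsets of [n] (here 'I_n). *)
Definition pts (n : nat) : finType := {A : {set 'I_n} | #|A| == 2}.

Definition line (n : nat) (i : 'I_n) : {set pts n} := [set e : pts n | i \in val e].

Definition Lines (n : nat) : {set {set pts n}} := [set line i | i : 'I_n].

Definition liftable_LnQ (n : nat) (Q : {set {set pts n}}) : Prop :=
  liftable (cover Q) Q.

Definition nice (n : nat) (P : {set {set {set pts n}}}) : Prop :=
  (forall Q, Q \in P -> (2 <= #|Q|)%N -> ~ liftable_LnQ Q) /\
  ~ (exists Q l, [/\ Q \in P, l \in Lines n, l \notin Q & l \subset cover Q]).

(* Main.v *)
Require Import Defs.
From mathcomp Require Import all_boot all_algebra.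
From mathcomp Require Import complex Rstruct ring.
Set Implicit Arguments. Unset Strict Implicit. Unset Printing Implicit Defensive.
Import GRing.Theory Num.Theory.
Local Open Scope ring_scope.

Section Gen.
Variable E : finType.
Implicit Types (gamma : E -> C3) (S X : {set E}).

Lemma fam_mem gamma S e : e \in S -> gamma e \in <<fam gamma S>>%VS.
Proof. by move=> eS; apply: memv_span; apply: map_f; rewrite mem_enum. Qed.

Lemma fam_sub gamma S (U : {vspace C3}) :
  (forall e, e \in S -> gamma e \in U) -> (<<fam gamma S>> <= U)%VS.
Proof. by move=> H; apply/span_subvP => v /mapP[e]; rewrite mem_enum => eS ->; apply: H. Qed.

Lemma size_fam gamma S : size (fam gamma S) = #|S|.
Proof. by rewrite size_map cardE. Qed.

Lemma dimC3 : \dim {: C3} = 3%N.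
Proof. by rewrite dimvf /dim /= mul1n. Qed.

Lemma dim_le3 (U : {vspace C3}) : (\dim U <= 3)%N.
Proof. by have := dimvS (subvf U); rewrite dimC3. Qed.

Lemma free_sub gamma X S : X \subset S -> free (fam gamma S) -> free (fam gamma X).
Proof.
move=> XS fS; have: perm_eq (fam gamma S) (fam gamma X ++ fam gamma (S :\: X)).
  rewrite -map_cat; apply: perm_map; apply: uniq_perm.
  - exact: enum_uniq.
  - rewrite cat_uniq !enum_uniq /= andbT; apply/hasPn => x; rewrite !mem_enum.
    by rewrite in_setD => /andP[].
  move=> x; rewrite mem_cat !mem_enum in_setD.
  by case xX: (x \in X) => //=; rewrite (subsetP XS).
by move/perm_free => H; rewrite H in fS; apply: catl_free fS.
Qed.

Lemma cv_of_planes (G : {set E}) (Ls : {set {set E}}) gamma :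
  (forall L, L \in Ls -> exists V : {vspace C3}, (\dim V <= 2)%N /\
       forall e, e \in L -> gamma e \in V) ->
  in_circuit_variety G Ls gamma.
Proof.
move=> HL S /andP[SG /existsP[X /andP[XS]]] /andP[XG].
case/orP => [/andP[/eqP X3 /existsP[L /andP[LLs XL]]] | /andP[/eqP X4 _]].
  apply/negP => /(free_sub XS) fX.
  have [V [dV HV]] := HL L LLs.
  move: fX; rewrite /free size_fam X3 => /eqP d3.
  have : (\dim <<fam gamma X>> <= \dim V)%N.
    by apply: dimvS; apply: fam_sub => e eX; apply: HV; apply: (subsetP XL).
  by rewrite d3 => /leq_trans/(_ dV).
apply/negP; rewrite /free size_fam => /eqP dS.
have := dim_le3 <<fam gamma S>>; rewrite dS.
by have := subset_leq_card XS; rewrite X4 => /leq_trans H /H.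
Qed.

End Gen.
Definition i0 : 'I_3 := @Ordinal 3 0 isT.
Definition i1 : 'I_3 := @Ordinal 3 1 isT.
Definition i2 : 'I_3 := @Ordinal 3 2 isT.
Definition vec (x y w : C) : C3 :=
  \row_(k < 3) (if val k == 0%N then x else if val k == 1%N then y else w).

Lemma vec0 x y w : vec x y w ord0 i0 = x. Proof. by rewrite mxE. Qed.
Lemma vec1 x y w : vec x y w ord0 i1 = y. Proof. by rewrite mxE. Qed.
Lemma vec2 x y w : vec x y w ord0 i2 = w. Proof. by rewrite mxE. Qed.

Lemma vec_lin k1 k2 x1 y1 w1 x2 y2 w2 :
  k1 *: vec x1 y1 w1 + k2 *: vec x2 y2 w2 =
  vec (k1 * x1 + k2 * x2) (k1 * y1 + k2 * y2) (k1 * w1 + k2 * w2).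
Proof.
apply/rowP => k; rewrite !mxE.
by case: k => [[|[|[|]]] ?] //=.
Qed.

Lemma lift_vec x y w : vec x y 0 + w *: vec 0 0 1 = vec x y w.
Proof.
apply/rowP => k; rewrite !mxE.
by case: k => [[|[|[|]]] ?] //=; rewrite ?mulr0 ?addr0 ?mulr1 ?add0r.
Qed.

Lemma vec_inj x y w x' y' w' : vec x y w = vec x' y' w' -> [/\ x = x', y = y' & w = w'].
Proof.
move=> e; split.
- by have := congr1 (fun v : C3 => v ord0 i0) e; rewrite !vec0.
- by have := congr1 (fun v : C3 => v ord0 i1) e; rewrite !vec1.
- by have := congr1 (fun v : C3 => v ord0 i2) e; rewrite !vec2.
Qed.

Lemma free_pi a b : free [:: vec 1 0 a; vec 0 1 b].
Proof.
rewrite free_cons seq1_free andbC; apply/andP; split.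
  by apply/eqP => /(congr1 (fun v : C3 => v ord0 i1)); rewrite vec1 mxE; apply/eqP; rewrite oner_eq0.
rewrite span_seq1; apply/negP => /vlineP[k] /(congr1 (fun v : C3 => v ord0 i0)).
by rewrite vec0 !mxE /= mulr0; apply/eqP; rewrite oner_eq0.
Qed.

Definition pv (a b : C) : seq C3 := [:: vec 1 0 a; vec 0 1 b].

Lemma memPi a b x y w :
  (vec x y w \in <<pv a b>>%VS) = (w == x * a + y * b).
Proof.
rewrite /pv; apply/idP/eqP.
  rewrite span_cons span_seq1 => /memv_addP[u /vlineP[k1 ->] [v /vlineP[k2 ->]]].
  rewrite vec_lin => /vec_inj[-> -> ->].
  by rewrite !mulr1 !mulr0 addr0 add0r.
move=> ->; have -> : vec x y (x * a + y * b) = x *: vec 1 0 a + y *: vec 0 1 b.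
  by rewrite vec_lin !mulr1 !mulr0 addr0 add0r.
by apply: memvD; apply: memvZ; apply: memv_span; rewrite !inE eqxx ?orbT.
Qed.

Lemma key a b x y w :
  ~~ free [:: vec x y w; vec 1 0 a; vec 0 1 b] -> w = x * a + y * b.
Proof.
by rewrite free_cons free_pi andbT negbK -/(pv a b) memPi => /eqP.
Qed.

Lemma rel3 (E : finType) (G : {set E}) (Ls : {set {set E}}) (g : E -> C3) (L : {set E})
  (r0 r1 f : E) a b x y w :
  in_circuit_variety G Ls g -> L \in Ls -> L \subset G ->
  r0 \in L -> r1 \in L -> f \in L -> f != r0 -> f != r1 -> r0 != r1 ->
  g r0 = vec 1 0 a -> g r1 = vec 0 1 b -> g f = vec x y w -> w = x * a + y * b.
Proof.
move=> cv LLs LG r0L r1L fL nf0 nf1 n01 g0 g1 gf.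
set S := [set f; r0; r1].
have SL : S \subset L by apply/subsetP => e; rewrite !inE -orbA => /or3P[] /eqP ->.
have pe0 : perm_eq (enum S) [:: f; r0; r1].
  apply: uniq_perm.
  - exact: enum_uniq.
  - by rewrite /= !inE negb_or nf0 nf1 n01.
  by move=> e; rewrite mem_enum !inE orbA.
have S3 : #|S| = 3%N by rewrite cardE (perm_size pe0).
have dep : pav3_dependent G Ls S.
  apply/andP; split; first exact: subset_trans SL LG.
  apply/existsP; exists S; rewrite subxx /= /pav3_circuit (subset_trans SL LG) /=.
  by rewrite S3 eqxx /=; apply/orP; left; apply/existsP; exists L; rewrite LLs SL.
have := cv S dep.
have pe : perm_eq (fam g S) [:: g f; g r0; g r1] by apply: (perm_map g pe0).
rewrite (perm_free pe) gf g0 g1; exact: key.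
Qed.

Section Pts.
Variable n : nat.

Lemma card2_set (i j : 'I_n) : i != j -> #|[set i; j]| == 2.
Proof. by rewrite cards2 => ->. Qed.

Definition mkpt (i j : 'I_n) (h : i != j) : pts n :=
  exist (fun A : {set 'I_n} => #|A| == 2) [set i; j] (card2_set h).

Lemma in_line (f : pts n) i : (f \in line i) = (i \in val f).
Proof. by rewrite inE. Qed.

Lemma mkpt_l1 i j (h : i != j) : mkpt h \in line i.
Proof. by rewrite in_line /= !inE eqxx. Qed.

Lemma mkpt_l2 i j (h : i != j) : mkpt h \in line j.
Proof. by rewrite in_line /= !inE eqxx orbT. Qed.

Lemma pt_eq (f : pts n) i j (h : i != j) : i \in val f -> j \in val f -> f = mkpt h.
Proof.
move=> hi hj; apply: val_inj => /=; apply/eqP; rewrite eq_sym eqEcard.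
have -> : [set i; j] \subset val f by apply/subsetP => k; rewrite !inE => /orP[] /eqP ->.
by rewrite /= cards2 h (eqP (valP f)).
Qed.

Lemma mkpt_neq (f : pts n) i j (h : i != j) k :
  k \in [set i; j] -> k \notin val f -> mkpt h != f.
Proof. by move=> k1 k2; apply/eqP => e; move: k2; rewrite -e /= k1. Qed.

Lemma exists_out (A : {set 'I_n}) : (#|A| < n)%N -> exists k, k \notin A.
Proof.
move=> lt; have : (0 < #|~: A|)%N by rewrite cardsCs setCK card_ord subn_gt0.
by case/card_gt0P => k; rewrite inE => kA; exists k.
Qed.

Lemma line_inj : (3 <= n)%N -> injective (@line n).
Proof.
move=> hn i j e; apply/eqP; apply/negPn/negP => hij.
have [k] : exists k, k \notin [set i; j] by apply: exists_out; rewrite cards2 hij.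
rewrite !inE negb_or => /andP[ki kj].
have h : i != k by rewrite eq_sym.
have := mkpt_l1 h; rewrite e in_line /= !inE.
by rewrite eq_sym (negbTE hij) /= eq_sym (negbTE kj).
Qed.

Lemma in_cover (Q : {set {set pts n}}) f :
  reflect (exists2 L, L \in Q & f \in L) (f \in cover Q).
Proof. exact: bigcupP. Qed.

Lemma line_cover (Q : {set {set pts n}}) i : line i \in Q -> line i \subset cover Q.
Proof. by move=> h; rewrite /cover; apply: (bigcup_sup (line i) h). Qed.

Lemma in_Lines (L : {set pts n}) : L \in Lines n -> exists i, L = line i.
Proof. by case/imsetP => i _ ->; exists i. Qed.

End Pts.

Definition gamS n (a b c d : 'I_n) (s : {set 'I_n}) : C3 :=
  if a \in s then (if d \in s then vec 0 1 0 else if c \in s then vec 1 1 0 else vec 1 0 0)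
  else if b \in s then (if c \in s then vec 0 1 0 else if d \in s then vec 1 1 0 else vec 0 1 0)
  else vec 1 0 0.

Lemma notlift n (Q : {set {set pts n}}) (a b c d : 'I_n) :
  a != b -> a != c -> a != d -> b != c -> b != d -> c != d ->
  line a \in Q -> line b \in Q -> line c \in Q -> line d \in Q ->
  Q \subset Lines n -> ~ liftable_LnQ Q.
Proof.
move=> hab hac had hbc hbd hcd La Lb Lc Ld QL lift.
have nab := negbTE hab; have nba : (b == a) = false by rewrite eq_sym.
have nac := negbTE hac; have nca : (c == a) = false by rewrite eq_sym.
have nad := negbTE had; have nda : (d == a) = false by rewrite eq_sym.
have nbc := negbTE hbc; have ncb : (c == b) = false by rewrite eq_sym.
have nbd := negbTE hbd; have ndb : (d == b) = false by rewrite eq_sym.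
have ncd := negbTE hcd; have ndc : (d == c) = false by rewrite eq_sym.
pose gam (p : pts n) := gamS a b c d (val p).
pose e3 := vec 0 0 1.
have gamH : forall p, exists x y, gam p = vec x y 0.
  by move=> p; rewrite /gam /gamS; repeat case: ifP => _; do 2 eexists; reflexivity.
pose pab := mkpt hab; pose pad := mkpt had; pose pac := mkpt hac.
pose pbc := mkpt hbc; pose pbd := mkpt hbd; pose pcd := mkpt hcd.
have g_ab : gam pab = vec 1 0 0.
  by rewrite /gam /gamS /= !inE !eqxx nda ndb nca ncb.
have g_ad : gam pad = vec 0 1 0 by rewrite /gam /gamS /= !inE !eqxx !orbT.
have g_ac : gam pac = vec 1 1 0 by rewrite /gam /gamS /= !inE !eqxx ?orbT nda ndc.
have g_bc : gam pbc = vec 0 1 0 by rewrite /gam /gamS /= !inE !eqxx ?orbT nab nac.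
have g_bd : gam pbd = vec 1 1 0 by rewrite /gam /gamS /= !inE !eqxx ?orbT nab nad ncb ncd.
have g_cd : gam pcd = vec 1 0 0 by rewrite /gam /gamS /= !inE nac nad nbc nbd.
have spanG : <<fam gam (cover Q)>>%VS = <<pv 0%R 0%R>>%VS.
  apply/subv_anti/andP; split.
    apply: fam_sub => p _; have [x [y ->]] := gamH p.
    by rewrite memPi !mulr0 addr0.
  apply/span_subvP => v; rewrite /pv !inE => /orP[] /eqP ->.
    by rewrite -g_ab; apply: fam_mem; apply: (subsetP (line_cover La)); apply: mkpt_l1.
  by rewrite -g_ad; apply: fam_mem; apply: (subsetP (line_cover La)); apply: mkpt_l1.
have d2 : \dim <<fam gam (cover Q)>> = 2%N.
  by rewrite spanG; have := free_pi 0 0; rewrite /free => /eqP.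
have qn : e3 \notin <<fam gam (cover Q)>>%VS.
  by rewrite spanG memPi !mulr0 addr0 oner_eq0.
have [z [cv d3]] := lift gam d2 e3 qn.
have gE : forall p x y, gam p = vec x y 0 -> gam p + z p *: e3 = vec x y (z p).
  by move=> p x y h; rewrite h lift_vec.
have rel : forall i r0 r1 f x y, line i \in Q -> r0 \in line i -> r1 \in line i ->
    f \in line i -> f != r0 -> f != r1 -> r0 != r1 ->
    gam r0 = vec 1 0 0 -> gam r1 = vec 0 1 0 -> gam f = vec x y 0 ->
    z f = x * z r0 + y * z r1.
  move=> i r0 r1 f x y Li r0i r1i fi n0 n1 n01 g0 g1 gf.
  by apply: (rel3 cv Li (line_cover Li) r0i r1i fi n0 n1 n01); apply: gE.
have NE := (nab, nba, nac, nca, nad, nda, nbc, ncb, nbd, ndb, ncd, ndc).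
have q1 : z pac = 1 * z pab + 1 * z pad.
  apply: (rel a) => //; try apply: mkpt_l1.
  - by apply: (@mkpt_neq _ _ _ _ _ c); rewrite /= !inE ?eqxx ?NE.
  - by apply: (@mkpt_neq _ _ _ _ _ c); rewrite /= !inE ?eqxx ?NE.
  - by apply: (@mkpt_neq _ _ _ _ _ b); rewrite /= !inE ?eqxx ?NE.
have q2 : z pac = 1 * z pcd + 1 * z pbc.
  apply: (rel c) => //; try apply: mkpt_l1; try apply: mkpt_l2.
  - by apply: (@mkpt_neq _ _ _ _ _ a); rewrite /= !inE ?eqxx ?NE.
  - by apply: (@mkpt_neq _ _ _ _ _ a); rewrite /= !inE ?eqxx ?NE.
  - by apply: (@mkpt_neq _ _ _ _ _ d); rewrite /= !inE ?eqxx ?NE.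
have q3 : z pbd = 1 * z pab + 1 * z pbc.
  apply: (rel b) => //; try apply: mkpt_l1; try apply: mkpt_l2.
  - by apply: (@mkpt_neq _ _ _ _ _ d); rewrite /= !inE ?eqxx ?NE.
  - by apply: (@mkpt_neq _ _ _ _ _ d); rewrite /= !inE ?eqxx ?NE.
  - by apply: (@mkpt_neq _ _ _ _ _ a); rewrite /= !inE ?eqxx ?NE.
have q4 : z pbd = 1 * z pcd + 1 * z pad.
  apply: (rel d) => //; try apply: mkpt_l2.
  - by apply: (@mkpt_neq _ _ _ _ _ b); rewrite /= !inE ?eqxx ?NE.
  - by apply: (@mkpt_neq _ _ _ _ _ b); rewrite /= !inE ?eqxx ?NE.
  - by apply: (@mkpt_neq _ _ _ _ _ c); rewrite /= !inE ?eqxx ?NE.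
have E1 : z pab + z pad = z pcd + z pbc by rewrite !mul1r in q1 q2; rewrite -q1 q2.
have E2 : z pab + z pbc = z pcd + z pad by rewrite !mul1r in q3 q4; rewrite -q3 q4.
have eCD : z pad = z pbc.
  have h2 : (2%:R : C) != 0 by rewrite pnatr_eq0.
  apply/subr0_eq; apply: (mulIf h2); rewrite mul0r.
  have -> : (z pad - z pbc) * 2%:R =
     (z pab + z pad - (z pcd + z pbc)) - (z pab + z pbc - (z pcd + z pad)) by ring.
  by rewrite E1 E2 !subrr ?subr0.
have eAB : z pab = z pcd by move: E1; rewrite eCD => /addIr.
have good : forall i r0 r1, line i \in Q -> r0 \in line i -> r1 \in line i -> r0 != r1 ->
    gam r0 = vec 1 0 0 -> gam r1 = vec 0 1 0 ->
    forall f x y, f \in line i -> gam f = vec x y 0 -> z f = x * z r0 + y * z r1.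
  move=> i r0 r1 Li r0i r1i n01 g0 g1 f x y fi gf.
  case: (eqVneq f r0) => [e0 | f0].
    by rewrite e0 g0 in gf *; case/vec_inj: gf => <- <- _; rewrite mul1r mul0r addr0.
  case: (eqVneq f r1) => [e1 | f1].
    by rewrite e1 g1 in gf *; case/vec_inj: gf => <- <- _; rewrite mul1r mul0r add0r.
  exact: (rel i r0 r1 f).
have gA := good a pab pad La (mkpt_l1 _) (mkpt_l1 _) ltac:(by apply: (@mkpt_neq _ _ _ _ _ b); rewrite /= !inE ?eqxx ?NE) g_ab g_ad.
have gB := good b pab pbc Lb (mkpt_l2 _) (mkpt_l1 _) ltac:(by apply: (@mkpt_neq _ _ _ _ _ a); rewrite /= !inE ?eqxx ?NE) g_ab g_bc.
have gC := good c pcd pbc Lc (mkpt_l1 _) (mkpt_l2 _) ltac:(by apply: (@mkpt_neq _ _ _ _ _ d); rewrite /= !inE ?eqxx ?NE) g_cd g_bc.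
have gD := good d pcd pad Ld (mkpt_l2 _) (mkpt_l2 _) ltac:(by apply: (@mkpt_neq _ _ _ _ _ c); rewrite /= !inE ?eqxx ?NE) g_cd g_ad.
rewrite -eCD in gB gC; rewrite -eAB in gC gD.
have allgood : forall i, line i \in Q -> forall f x y, f \in line i -> gam f = vec x y 0 ->
    z f = x * z pab + y * z pad.
  move=> i Li.
  case: (eqVneq i a) => [-> //| hia].
  case: (eqVneq i b) => [-> //| hib].
  case: (eqVneq i c) => [-> //| hic].
  case: (eqVneq i d) => [-> //| hid].
  have nia := negbTE hia; have nai : (a == i) = false by rewrite eq_sym.
  have nib := negbTE hib; have nbi : (b == i) = false by rewrite eq_sym.
  have nic := negbTE hic; have nci : (c == i) = false by rewrite eq_sym.
  have nid := negbTE hid; have ndi : (d == i) = false by rewrite eq_sym.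
  pose pia := mkpt hia; pose pib := mkpt hib.
  have gia : gam pia = vec 1 0 0 by rewrite /gam /gamS /= !inE ?eqxx ?NE ?nai ?nbi ?nci ?ndi ?orbT ?orbF.
  have gib : gam pib = vec 0 1 0 by rewrite /gam /gamS /= !inE ?eqxx ?NE ?nai ?nbi ?nci ?ndi ?orbT ?orbF.
  have zia : z pia = z pab.
    by rewrite (gA pia 1 0 (mkpt_l2 _) gia) mul1r mul0r addr0.
  have zib : z pib = z pad.
    by rewrite (gB pib 0 1 (mkpt_l2 _) gib) mul1r mul0r add0r.
  have := good i pia pib Li (mkpt_l1 _) (mkpt_l1 _) ltac:(by apply: (@mkpt_neq _ _ _ _ _ a); rewrite /= !inE ?eqxx ?nai ?nab) gia gib.
  by rewrite zia zib.
have sub : (<<fam (fun e => (gam e + z e *: e3)%R) (cover Q)>> <= <<pv (z pab) (z pad)>>)%VS.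
  apply: fam_sub => f; case/in_cover => L LQ fL.
  have [i Li] := in_Lines (subsetP QL _ LQ); subst L.
  have [x [y gf]] := gamH f.
  by rewrite (gE _ _ _ gf) memPi (allgood i LQ f x y fL gf).
have := dimvS sub; rewrite d3 => /leq_trans/(_ (dim_span _)).
by [].
Qed.

Lemma dim3 (H W : {vspace C3}) (q : C3) :
  \dim H = 2%N -> q \notin H -> (H <= W)%VS -> q \in W -> \dim W = 3%N.
Proof.
move=> dH qH HW qW.
have q0 : q != 0 by apply: contraNneq qH => ->; apply: mem0v.
have disj : (H :&: <[q]> = 0)%VS.
  apply/eqP; rewrite -subv0; apply/subvP => v /memv_capP[vH /vlineP[k vk]].
  rewrite memv0; subst v; case: (eqVneq k 0) => [->|k0]; first by rewrite scale0r.
  exfalso; move/negP: qH; apply.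
  by have := memvZ k^-1 vH; rewrite scalerA mulVf // scale1r.
have d : \dim (H + <[q]>) = 3%N by rewrite dimv_disjoint_sum // dH dim_vline q0.
have sub : (H + <[q]> <= W)%VS by rewrite subv_add HW -memvE.
have := dimvS sub; rewrite d => h.
by apply/eqP; rewrite eqn_leq dim_le3 h.
Qed.

Definition o0 : 'I_2 := @Ordinal 2 0 isT.
Definition o1 : 'I_2 := @Ordinal 2 1 isT.
Definition cw (u w v : C3) : C := coord [tuple u; w] o0 v.
Definition cw2 (u w v : C3) : C := coord [tuple u; w] o1 v.

Lemma coord2 (u w v : C3) : v \in <<[:: u; w]>>%VS ->
  v = cw u w v *: u + cw2 u w v *: w.
Proof.
move=> vs; rewrite {1}(coord_span (X := [tuple u; w]) vs).
rewrite big_ord_recl big_ord1 /cw /cw2.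
have -> : (ord0 : 'I_2) = o0 by apply: val_inj.
by have -> : (lift o0 ord0 : 'I_2) = o1 by apply: val_inj.
Qed.

Lemma cwZ u w k v : cw u w (k *: v) = k * cw u w v.
Proof. by rewrite /cw linearZ. Qed.

Lemma cw_u u w : free [:: u; w] -> cw u w u = 1.
Proof. by move=> f; have := coord_free o0 o0 (X := [tuple u; w]) f. Qed.

Lemma cw_w u w : free [:: u; w] -> cw u w w = 0.
Proof. by move=> f; have := coord_free o1 o0 (X := [tuple u; w]) f. Qed.

Lemma rot_mem (u w q v : C3) (l : C) : v \in <<[:: u; w]>>%VS ->
  (v - (l * cw u w v) *: q \in <<[:: u - l *: q; w]>>%VS).
Proof.
move=> vs; rewrite {1}(coord2 vs).
set a := cw u w v; set b := cw2 u w v.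
have -> : a *: u + b *: w - (l * a) *: q = a *: (u - l *: q) + b *: w.
  by rewrite scalerBr scalerA mulrC addrAC.
by apply: memvD; apply: memvZ; apply: memv_span; rewrite !inE eqxx ?orbT.
Qed.

Lemma free2 (u w : C3) : w != 0 -> u \notin <[w]>%VS -> free [:: u; w].
Proof. by move=> w0 uw; rewrite free_cons span_seq1 uw seq1_free. Qed.

Section Lift.
Variable E : finType.
Implicit Types (gamma : E -> C3) (Ls : {set {set E}}).

Lemma in_coverE Ls L f : L \in Ls -> f \in L -> f \in cover Ls.
Proof. by move=> LLs fL; apply/bigcupP; exists L. Qed.

Lemma sub_coverE Ls L : L \in Ls -> L \subset cover Ls.
Proof. by move=> LLs; apply/subsetP => f; apply: in_coverE. Qed.

Lemma lift_one Ls gamma (q : C3) (l : {set E}) (e : E) :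
  l \in Ls -> e \in l -> (forall L, L \in Ls -> e \in L -> L = l) ->
  (\dim <<fam gamma l>> <= 1)%N ->
  gamma e \in <<fam gamma (cover Ls :\ e)>>%VS ->
  \dim <<fam gamma (cover Ls)>> = 2%N -> q \notin <<fam gamma (cover Ls)>>%VS ->
  exists z : E -> C, in_circuit_variety (cover Ls) Ls (fun f => gamma f + z f *: q) /\
    \dim <<fam (fun f => (gamma f + z f *: q)%R) (cover Ls)>> = 3%N.
Proof.
move=> lLs el eonly dl ge d2 qn.
pose z := fun f => if f == e then (1 : C) else 0.
have z0 : forall f, f != e -> gamma f + z f *: q = gamma f.
  by move=> f fe; rewrite /z (negbTE fe) scale0r addr0.
exists z; split.
  apply: cv_of_planes => L LLs; case: (eqVneq L l) => [-> | Ll].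
    exists (<<fam gamma l>> + <[q]>)%VS; split.
      apply: leq_trans (dimv_add_leqif _ _).1 _.
      by rewrite dim_vline; case: (q != 0); rewrite ?addn1 ?addn0 // (leq_trans dl).
    move=> f fl; apply: memv_add; first exact: fam_mem.
    by apply: memvZ; apply: memv_line.
  exists <<fam gamma (cover Ls)>>%VS; rewrite d2; split=> // f fL.
  have fe : f != e by apply: contra_neq Ll => fe; apply: eonly => //; rewrite -fe.
  by rewrite z0 //; apply: fam_mem; apply: in_coverE fL.
set W := <<fam _ (cover Ls)>>%VS.
have ec : e \in cover Ls by apply: in_coverE el.
have Wg : forall f, f \in cover Ls -> f != e -> gamma f \in W.
  by move=> f fc fe; rewrite -z0 //; apply: (fam_mem (fun f => gamma f + z f *: q)).
have geW : gamma e \in W.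
  apply: (subvP (fam_sub (U := W) _) _ ge) => f; rewrite in_setD1 => /andP[fe fc].
  exact: Wg.
apply: (dim3 d2 qn).
  by apply: fam_sub => f fc; case: (eqVneq f e) => [->|fe]; [exact: geW | exact: Wg].
have : gamma e + z e *: q \in W by apply: (fam_mem (fun f => gamma f + z f *: q)).
rewrite /z eqxx scale1r => h.
by have := memvB h geW; rewrite addrC addKr.
Qed.

Lemma lift_D Ls gamma (q : C3) (l : {set E}) (e1 e2 : E) :
  l \in Ls -> e1 \in l -> e2 \in l -> e1 != e2 ->
  (forall L, L \in Ls -> e1 \in L -> L = l) ->
  (forall L, L \in Ls -> e2 \in L -> L = l) ->
  (\dim <<fam gamma l>> <= 1)%N ->
  \dim <<fam gamma (cover Ls)>> = 2%N -> q \notin <<fam gamma (cover Ls)>>%VS ->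
  exists z : E -> C, in_circuit_variety (cover Ls) Ls (fun f => gamma f + z f *: q) /\
    \dim <<fam (fun f => (gamma f + z f *: q)%R) (cover Ls)>> = 3%N.
Proof.
move=> lLs e1l e2l e12 o1 o2 dl d2 qn.
case: (boolP (gamma e1 \in <<fam gamma (cover Ls :\ e1)>>%VS)) => h1.
  exact: (lift_one lLs e1l o1 dl h1 d2 qn).
case: (boolP (gamma e2 \in <<fam gamma (cover Ls :\ e2)>>%VS)) => h2.
  exact: (lift_one lLs e2l o2 dl h2 d2 qn).
exfalso; move/negP: h1; apply.
have g21 : gamma e2 \in <<fam gamma (cover Ls :\ e1)>>%VS.
  by apply: fam_mem; rewrite in_setD1 eq_sym e12 (in_coverE lLs e2l).
have g2nz : gamma e2 != 0 by apply: contraNneq h2 => ->; apply: mem0v.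
have sub : (<[gamma e2]> <= <<fam gamma l>>)%VS by rewrite -memvE; apply: fam_mem.
have := geq_leqif (dimv_leqif_sup sub); rewrite dim_vline g2nz dl => /esym sub2.
apply: (subvP (subv_trans sub2 _)); first by rewrite -memvE.
exact: fam_mem.
Qed.

Lemma pick_w gamma (c : E) (H : {vspace C3}) : \dim H = 2%N -> gamma c \in H ->
  exists w : C3, [/\ w != 0, w \in H & gamma c \in <[w]>%VS].
Proof.
move=> dH gc; case: (eqVneq (gamma c) 0) => g0.
  exists (vpick H); split; last by rewrite g0 mem0v.
    by rewrite vpick0; apply/eqP => H0; move: dH; rewrite H0 dimv0.
  exact: memv_pick.
by exists (gamma c); split=> //; apply: memv_line.
Qed.

Lemma pick_u gamma (L : {set E}) (w : C3) : (2 <= \dim <<fam gamma L>>)%N ->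
  w != 0 -> exists2 e, e \in L & gamma e \notin <[w]>%VS.
Proof.
move=> dL w0; case: (boolP [exists e in L, gamma e \notin <[w]>%VS]).
  by case/existsP => e /andP[eL ew]; exists e.
move/existsPn => h; exfalso.
have sub : (<<fam gamma L>> <= <[w]>)%VS.
  by apply: fam_sub => e eL; have := h e; rewrite eL /= negbK.
by have := leq_trans dL (dimvS sub); rewrite dim_vline w0.
Qed.

Lemma basis2 (H : {vspace C3}) u w : \dim H = 2%N -> u \in H -> w \in H ->
  free [:: u; w] -> (H <= <<[:: u; w]>>)%VS.
Proof.
move=> dH uH wH fr.
have sub : (<<[:: u; w]>> <= H)%VS by apply/span_subvP => v; rewrite !inE => /orP[]/eqP->.
rewrite -(geq_leqif (dimv_leqif_sup sub)) dH.
by move: fr; rewrite /free => /eqP ->.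
Qed.

Lemma span_full gamma Ls (L : {set E}) : L \in Ls ->
  \dim <<fam gamma (cover Ls)>> = 2%N -> (2 <= \dim <<fam gamma L>>)%N ->
  (<<fam gamma (cover Ls)>> <= <<fam gamma L>>)%VS.
Proof.
move=> LLs d2 dL.
have sub : (<<fam gamma L>> <= <<fam gamma (cover Ls)>>)%VS.
  by apply: fam_sub => f fL; apply: fam_mem; apply: in_coverE fL.
by rewrite -(geq_leqif (dimv_leqif_sup sub)) d2.
Qed.

Lemma cw_line u w (v : C3) : free [:: u; w] -> v \in <[w]>%VS -> cw u w v = 0.
Proof. by move=> fr /vlineP[k ->]; rewrite cwZ cw_w // mulr0. Qed.

Lemma lift_N2 Ls gamma (q : C3) (l1 l2 : {set E}) (c : E) :
  l1 \in Ls -> l2 \in Ls -> (forall L, L \in Ls -> L = l1 \/ L = l2) ->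
  (forall f, f \in l1 -> f \in l2 -> f = c) -> c \in l1 ->
  (2 <= \dim <<fam gamma l1>>)%N -> (2 <= \dim <<fam gamma l2>>)%N ->
  \dim <<fam gamma (cover Ls)>> = 2%N -> q \notin <<fam gamma (cover Ls)>>%VS ->
  exists z : E -> C, in_circuit_variety (cover Ls) Ls (fun f => gamma f + z f *: q) /\
    \dim <<fam (fun f => (gamma f + z f *: q)%R) (cover Ls)>> = 3%N.
Proof.
move=> l1L l2L Lor inter cl1 dl1 dl2 d2 qn.
set H := <<fam gamma (cover Ls)>>%VS.
have gH : forall f, f \in cover Ls -> gamma f \in H by move=> f fc; apply: fam_mem.
have [w [w0 wH gw]] := pick_w d2 (gH c (in_coverE l1L cl1)).
have [e el2 ew] := pick_u dl2 w0.
set u := gamma e.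
have fr : free [:: u; w] := free2 w0 ew.
have uH : u \in H := gH e (in_coverE l2L el2).
have Hb := basis2 d2 uH wH fr.
have cwc : cw u w (gamma c) = 0 := cw_line fr gw.
pose z := fun f => if f \in l2 then - cw u w (gamma f) else 0.
have z1 : forall f, f \in l1 -> z f = 0.
  move=> f fl1; rewrite /z; case: ifP => // fl2.
  by rewrite (inter f fl1 fl2) cwc oppr0.
have z2 : forall f, f \in l2 -> gamma f + z f *: q = gamma f - (1 * cw u w (gamma f)) *: q.
  by move=> f fl2; rewrite /z fl2 mul1r scaleNr.
exists z; split.
  apply: cv_of_planes => L LLs; case: (Lor L LLs) => ->.
    exists H; rewrite d2; split=> // f fl1.
    by rewrite z1 // scale0r addr0; apply: gH; apply: in_coverE fl1.
  exists <<[:: u - 1 *: q; w]>>%VS; split; first exact: dim_span.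
  move=> f fl2; rewrite z2 //; apply: rot_mem; apply: (subvP Hb).
  by apply: gH; apply: in_coverE fl2.
set W := <<fam _ (cover Ls)>>%VS.
have inW : forall f, f \in cover Ls -> gamma f + z f *: q \in W.
  by move=> f fc; apply: (fam_mem (fun f => gamma f + z f *: q)).
have HW : (H <= W)%VS.
  apply: subv_trans (span_full l1L d2 dl1) _.
  apply: fam_sub => f fl1; have := inW f (in_coverE l1L fl1).
  by rewrite z1 // scale0r addr0.
apply: (dim3 d2 qn HW).
have := inW e (in_coverE l2L el2); rewrite z2 // cw_u // mul1r scale1r => h.
by have := memvB (subvP HW _ uH) h; rewrite opprB addrC subrK.
Qed.

Lemma q_from (W : {vspace C3}) (u q : C3) (k : C) :
  u \in W -> u - k *: q \in W -> k != 0 -> q \in W.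
Proof.
move=> uW h k0; have := memvB uW h; rewrite opprB addrC subrK => kq.
by have := memvZ k^-1 kq; rewrite scalerA mulVf // scale1r.
Qed.

Lemma lift_N3 Ls gamma (q : C3) (l1 l2 l3 : {set E}) (c12 c13 c23 : E) :
  l1 \in Ls -> l2 \in Ls -> l3 \in Ls ->
  (forall L, L \in Ls -> [\/ L = l1, L = l2 | L = l3]) ->
  (forall f, f \in l1 -> f \in l2 -> f = c12) ->
  (forall f, f \in l1 -> f \in l3 -> f = c13) ->
  (forall f, f \in l2 -> f \in l3 -> f = c23) ->
  c12 \in l1 -> c13 \in l1 -> c23 \in l2 ->
  (2 <= \dim <<fam gamma l1>>)%N -> (2 <= \dim <<fam gamma l2>>)%N ->
  (2 <= \dim <<fam gamma l3>>)%N ->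
  \dim <<fam gamma (cover Ls)>> = 2%N -> q \notin <<fam gamma (cover Ls)>>%VS ->
  exists z : E -> C, in_circuit_variety (cover Ls) Ls (fun f => gamma f + z f *: q) /\
    \dim <<fam (fun f => (gamma f + z f *: q)%R) (cover Ls)>> = 3%N.
Proof.
move=> l1L l2L l3L Lor i12 i13 i23 c12l c13l c23l dl1 dl2 dl3 d2 qn.
set H := <<fam gamma (cover Ls)>>%VS.
have gH : forall f, f \in cover Ls -> gamma f \in H by move=> f fc; apply: fam_mem.
have [w2 [w20 w2H gw2]] := pick_w d2 (gH c12 (in_coverE l1L c12l)).
have [w3 [w30 w3H gw3]] := pick_w d2 (gH c13 (in_coverE l1L c13l)).
have [e2 e2l ew2] := pick_u dl2 w20.
have [e3 e3l ew3] := pick_u dl3 w30.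
set u2 := gamma e2; set u3 := gamma e3.
have fr2 : free [:: u2; w2] := free2 w20 ew2.
have fr3 : free [:: u3; w3] := free2 w30 ew3.
have u2H : u2 \in H := gH e2 (in_coverE l2L e2l).
have u3H : u3 \in H := gH e3 (in_coverE l3L e3l).
have Hb2 := basis2 d2 u2H w2H fr2.
have Hb3 := basis2 d2 u3H w3H fr3.
have cwc2 : cw u2 w2 (gamma c12) = 0 := cw_line fr2 gw2.
have cwc3 : cw u3 w3 (gamma c13) = 0 := cw_line fr3 gw3.
set A := cw u2 w2 (gamma c23); set B := cw u3 w3 (gamma c23).
pose lam : C := if (A == 0) && (B == 0) then 1 else B.
pose mu : C := if (A == 0) && (B == 0) then 0 else A.
have hlm : lam * A = mu * B.
  rewrite /lam /mu; case: ifP => [/andP[/eqP-> /eqP->] | _]; last exact: mulrC.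
  by rewrite !mulr0.
have hnz : lam != 0 \/ mu != 0.
  rewrite /lam /mu; case: ifP => [_ | /negbT]; first by left; apply: oner_neq0.
  by rewrite negb_and => /orP[A0 | B0]; [right | left].
pose z := fun f => if f \in l2 then - (lam * cw u2 w2 (gamma f))
                   else if f \in l3 then - (mu * cw u3 w3 (gamma f)) else 0.
have z1 : forall f, f \in l1 -> z f = 0.
  move=> f fl1; rewrite /z; case: ifP => [fl2 | _].
    by rewrite (i12 f fl1 fl2) cwc2 mulr0 oppr0.
  case: ifP => // fl3.
  by rewrite (i13 f fl1 fl3) cwc3 mulr0 oppr0.
have z2 : forall f, f \in l2 -> gamma f + z f *: q = gamma f - (lam * cw u2 w2 (gamma f)) *: q.
  by move=> f fl2; rewrite /z fl2 scaleNr.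
have z3 : forall f, f \in l3 -> gamma f + z f *: q = gamma f - (mu * cw u3 w3 (gamma f)) *: q.
  move=> f fl3; rewrite /z fl3; case: ifP => fl2; last by rewrite scaleNr.
  by rewrite (i23 f fl2 fl3) -/A hlm scaleNr.
exists z; split.
  apply: cv_of_planes => L LLs; case: (Lor L LLs) => ->.
  - exists H; rewrite d2; split=> // f fl1.
    by rewrite z1 // scale0r addr0; apply: gH; apply: in_coverE fl1.
  - exists <<[:: u2 - lam *: q; w2]>>%VS; split; first exact: dim_span.
    move=> f fl2; rewrite z2 //; apply: rot_mem; apply: (subvP Hb2).
    by apply: gH; apply: in_coverE fl2.
  - exists <<[:: u3 - mu *: q; w3]>>%VS; split; first exact: dim_span.
    move=> f fl3; rewrite z3 //; apply: rot_mem; apply: (subvP Hb3).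
    by apply: gH; apply: in_coverE fl3.
set W := <<fam _ (cover Ls)>>%VS.
have inW : forall f, f \in cover Ls -> gamma f + z f *: q \in W.
  by move=> f fc; apply: (fam_mem (fun f => gamma f + z f *: q)).
have HW : (H <= W)%VS.
  apply: subv_trans (span_full l1L d2 dl1) _.
  apply: fam_sub => f fl1; have := inW f (in_coverE l1L fl1).
  by rewrite z1 // scale0r addr0.
apply: (dim3 d2 qn HW).
case: hnz => [l0 | m0].
  have := inW e2 (in_coverE l2L e2l); rewrite z2 // cw_u // mulr1 => h.
  exact: (q_from (subvP HW _ u2H) h l0).
have := inW e3 (in_coverE l3L e3l); rewrite z3 // cw_u // mulr1 => h.
exact: (q_from (subvP HW _ u3H) h m0).
Qed.

End Lift.

Lemma exists_out_seq n (s : seq 'I_n) : (size s < n)%N -> exists k, k \notin s.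
Proof.
move=> h; have [|k] := @exists_out n [set x in s].
  by rewrite cardsE; apply: leq_ltn_trans (card_size s) h.
by rewrite inE => ks; exists k.
Qed.

Lemma pt_free n (Ls : {set {set pts n}}) (i k : 'I_n) (h : i != k) :
  (forall L, L \in Ls -> exists2 j, L = line j & j != k) ->
  forall L, L \in Ls -> mkpt h \in L -> L = line i.
Proof.
move=> H L LL; case: (H L LL) => j -> jk.
by rewrite in_line /= !inE (negbTE jk) orbF => /eqP ->.
Qed.

Lemma lift2 n (a b : 'I_n) : (4 <= n)%N -> a != b -> liftable_LnQ [set line a; line b].
Proof.
move=> hn hab gamma d2 q qn.
set Ls := [set line a; line b].
have [k1] := @exists_out_seq n [:: a; b] ltac:(by apply: leq_trans hn).
rewrite !inE negb_or => /andP[k1a k1b].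
have [k2] := @exists_out_seq n [:: a; b; k1] ltac:(by apply: leq_trans hn).
rewrite !inE !negb_or => /and3P[k2a k2b k2k1].
have La : line a \in Ls by rewrite !inE eqxx.
have Lb : line b \in Ls by rewrite !inE eqxx orbT.
have Lor : forall L, L \in Ls -> L = line a \/ L = line b.
  by move=> L; rewrite !inE => /orP[]/eqP->; [left | right].
have idx : forall k, k != a -> k != b -> forall L, L \in Ls -> exists2 j, L = line j & j != k.
  move=> k ka kb L /Lor[] ->; [exists a | exists b] => //; by rewrite eq_sym.
have hak1 : a != k1 by rewrite eq_sym. have hak2 : a != k2 by rewrite eq_sym.
have hbk1 : b != k1 by rewrite eq_sym. have hbk2 : b != k2 by rewrite eq_sym.
case: (leqP (\dim <<fam gamma (line a)>>) 1) => da.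
  apply: (lift_D (e1 := mkpt hak1) (e2 := mkpt hak2) La (mkpt_l1 _) (mkpt_l1 _) _
            (pt_free (idx k1 k1a k1b)) (pt_free (idx k2 k2a k2b)) da d2 qn).
  apply: (@mkpt_neq _ _ _ _ _ k1); rewrite /= !inE; first by rewrite eqxx orbT.
  by rewrite negb_or k1a eq_sym k2k1.
case: (leqP (\dim <<fam gamma (line b)>>) 1) => db.
  apply: (lift_D (e1 := mkpt hbk1) (e2 := mkpt hbk2) Lb (mkpt_l1 _) (mkpt_l1 _) _
            (pt_free (idx k1 k1a k1b)) (pt_free (idx k2 k2a k2b)) db d2 qn).
  apply: (@mkpt_neq _ _ _ _ _ k1); rewrite /= !inE; first by rewrite eqxx orbT.
  by rewrite negb_or k1b eq_sym k2k1.
apply: (lift_N2 (c := mkpt hab) La Lb Lor _ (mkpt_l1 _) da db d2 qn).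
by move=> f; rewrite !in_line => fa fb; apply: pt_eq.
Qed.

Lemma lift3 n (a b c : 'I_n) : (5 <= n)%N -> a != b -> a != c -> b != c ->
  liftable_LnQ [set line a; line b; line c].
Proof.
move=> hn hab hac hbc gamma d2 q qn.
set Ls := [set line a; line b; line c].
have [k1] := @exists_out_seq n [:: a; b; c] ltac:(by apply: leq_trans hn).
rewrite !inE !negb_or => /and3P[k1a k1b k1c].
have [k2] := @exists_out_seq n [:: a; b; c; k1] ltac:(by apply: leq_trans hn).
rewrite !inE !negb_or => /and4P[k2a k2b k2c k2k1].
have La : line a \in Ls by rewrite !inE eqxx.
have Lb : line b \in Ls by rewrite !inE eqxx orbT.
have Lc : line c \in Ls by rewrite !inE eqxx !orbT.
have Lor : forall L, L \in Ls -> [\/ L = line a, L = line b | L = line c].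
  by move=> L; rewrite !inE -orbA => /or3P[]/eqP->; [constructor 1 | constructor 2 | constructor 3].
have idx : forall k, k != a -> k != b -> k != c ->
    forall L, L \in Ls -> exists2 j, L = line j & j != k.
  move=> k ka kb kc L /Lor[] ->; [exists a | exists b | exists c] => //; by rewrite eq_sym.
have f1 := pt_free (idx k1 k1a k1b k1c).
have f2 := pt_free (idx k2 k2a k2b k2c).
have hak1 : a != k1 by rewrite eq_sym. have hak2 : a != k2 by rewrite eq_sym.
have hbk1 : b != k1 by rewrite eq_sym. have hbk2 : b != k2 by rewrite eq_sym.
have hck1 : c != k1 by rewrite eq_sym. have hck2 : c != k2 by rewrite eq_sym.
case: (leqP (\dim <<fam gamma (line a)>>) 1) => da.
  apply: (lift_D (e1 := mkpt hak1) (e2 := mkpt hak2) La (mkpt_l1 _) (mkpt_l1 _) _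
            (f1 _ _) (f2 _ _) da d2 qn).
  apply: (@mkpt_neq _ _ _ _ _ k1); rewrite /= !inE; first by rewrite eqxx orbT.
  by rewrite negb_or k1a eq_sym k2k1.
case: (leqP (\dim <<fam gamma (line b)>>) 1) => db.
  apply: (lift_D (e1 := mkpt hbk1) (e2 := mkpt hbk2) Lb (mkpt_l1 _) (mkpt_l1 _) _
            (f1 _ _) (f2 _ _) db d2 qn).
  apply: (@mkpt_neq _ _ _ _ _ k1); rewrite /= !inE; first by rewrite eqxx orbT.
  by rewrite negb_or k1b eq_sym k2k1.
case: (leqP (\dim <<fam gamma (line c)>>) 1) => dc.
  apply: (lift_D (e1 := mkpt hck1) (e2 := mkpt hck2) Lc (mkpt_l1 _) (mkpt_l1 _) _
            (f1 _ _) (f2 _ _) dc d2 qn).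
  apply: (@mkpt_neq _ _ _ _ _ k1); rewrite /= !inE; first by rewrite eqxx orbT.
  by rewrite negb_or k1c eq_sym k2k1.
apply: (lift_N3 (c12 := mkpt hab) (c13 := mkpt hac) (c23 := mkpt hbc) La Lb Lc Lor
          _ _ _ (mkpt_l1 _) (mkpt_l1 _) (mkpt_l1 _) da db dc d2 qn).
- by move=> f; rewrite !in_line => fa fb; apply: pt_eq.
- by move=> f; rewrite !in_line => fa fb; apply: pt_eq.
- by move=> f; rewrite !in_line => fa fb; apply: pt_eq.
Qed.

Lemma enum2 (T : finType) (A : {set T}) : #|A| = 2%N ->
  exists a b, a != b /\ forall x, (x \in A) = (x \in [:: a; b]).
Proof.
rewrite cardE; have u := enum_uniq A; have m := mem_enum A.
case E: (enum A) u m => [|a [|b [|c s]]] //= u m _.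
exists a, b; split; first by move: u; rewrite !inE andbT.
by move=> x; rewrite -m.
Qed.

Lemma enum3 (T : finType) (A : {set T}) : #|A| = 3%N ->
  exists a b c, [/\ a != b, a != c, b != c & forall x, (x \in A) = (x \in [:: a; b; c])].
Proof.
rewrite cardE; have u := enum_uniq A; have m := mem_enum A.
case E: (enum A) u m => [|a [|b [|c [|d s]]]] //= u m _.
exists a, b, c; move: u; rewrite !inE !negb_or !andbT => /andP[/andP[ab ac] bc].
by split=> // x; rewrite -m.
Qed.

Lemma enum4 (T : finType) (A : {set T}) : (4 <= #|A|)%N ->
  exists a b c d, [/\ a != b, a != c, a != d & [/\ b != c, b != d & c != d]] /\
                   [/\ a \in A, b \in A, c \in A & d \in A].
Proof.
rewrite cardE; have u := enum_uniq A; have m := mem_enum A.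
case E: (enum A) u m => [|a [|b [|c [|d s]]]] //= u m _.
exists a, b, c, d; move: u; rewrite !inE !negb_or.
move=> /andP[/and4P[ab ac ad _] /andP[/and3P[bc bd _] /andP[/andP[cd _] _]]].
by split; [split=> //; split | split; rewrite -m !inE eqxx ?orbT].
Qed.

Section Main.
Variable n : nat.
Hypothesis hn : (4 <= n)%N.

Definition idxs (Q : {set {set pts n}}) := [set i | line i \in Q].

Lemma line_inj' : injective (@line n).
Proof. by apply: line_inj; apply: leq_trans hn. Qed.

Lemma Q_imset (Q : {set {set pts n}}) : Q \subset Lines n -> Q = (@line n) @: idxs Q.
Proof.
move=> QL; apply/setP => L; apply/idP/imsetP.
  by move=> LQ; have [i Li] := in_Lines (subsetP QL _ LQ); exists i; rewrite // inE -Li.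
by case=> i; rewrite inE => iQ ->.
Qed.

Lemma card_idxs (Q : {set {set pts n}}) : Q \subset Lines n -> #|Q| = #|idxs Q|.
Proof. by move=> QL; rewrite {1}(Q_imset QL) card_imset //; apply: line_inj'. Qed.

Lemma all_but (A : {set 'I_n}) (j : 'I_n) :
  j \notin A -> (forall k, k != j -> k \in A) -> #|A| = n.-1.
Proof.
move=> jA h; have -> : A = [set~ j].
  apply/setP => k; rewrite in_setC1; case: (eqVneq k j) => [-> | kj].
    exact: negbTE.
  exact: h.
by rewrite cardsC1 card_ord.
Qed.

Lemma all_but2 (A : {set 'I_n}) (j : 'I_n) :
  j \notin A -> #|A| = n.-1 -> forall k, k != j -> k \in A.
Proof.
move=> jA cA k kj.
have sub : A \subset [set~ j].
  by apply/subsetP => x xA; rewrite in_setC1; apply: contraNneq jA => <-.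
have : A == [set~ j] by rewrite eqEcard sub cardsC1 card_ord cA leqnn.
by move/eqP => ->; rewrite in_setC1.
Qed.

End Main.

Theorem lemma6p4 (n : nat) (hn : (4 <= n)%N) (P : {set {set {set pts n}}}) :
  partition P (Lines n) ->
  (nice P <-> forall Q, Q \in P -> #|Q| \notin [:: 2; 3; n.-1]%N).
Proof.
case/and3P => /eqP covP _ _.
have QL : forall Q, Q \in P -> Q \subset Lines n.
  by move=> Q QP; rewrite -covP; apply: (bigcup_sup Q QP).
have inI : forall (Q : {set {set pts n}}) (i : 'I_n), (i \in idxs Q) = (line i \in Q) by move=> Q i; rewrite /idxs inE.
have n1 : forall Q, Q \in P -> (#|Q| = n.-1 <->
     exists l, [/\ l \in Lines n, l \notin Q & l \subset cover Q]).
  move=> Q QP; rewrite (card_idxs hn (QL Q QP)); split.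
    move=> cI; have [j jI] : exists j, j \notin idxs Q.
      by apply: exists_out; rewrite cI ltn_predL (leq_trans _ hn).
    exists (line j); split.
    - by apply/imsetP; exists j.
    - by rewrite -inI.
    apply/subsetP => f fj; rewrite in_line in fj.
    have /cards2P [x [y [xy vf]]] := valP f.
    have [k [kj kf]] : exists k, k != j /\ k \in val f.
      rewrite vf in fj *; case: (eqVneq x j) => [xj | xj].
        by exists y; rewrite -xj eq_sym xy !inE eqxx orbT.
      by exists x; rewrite xj !inE eqxx.
    have kI := all_but2 jI cI kj; rewrite inI in kI.
    by apply: (in_coverE kI); rewrite in_line.
  case=> l [lL lQ lc]; have [j lj] := in_Lines lL; subst l.
  apply: (@all_but n _ j); first by rewrite inI.
  move=> k kj; have hjk : j != k by rewrite eq_sym.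
  have := subsetP lc _ (mkpt_l1 hjk); case/bigcupP => L LQ fL.
  have [i Li] := in_Lines (subsetP (QL Q QP) L LQ); subst L.
  move: fL; rewrite in_line /= !inE => /orP[]/eqP ei; subst i.
    by rewrite LQ in lQ.
  by [].
split.
  case=> Ni Nii Q QP; rewrite !inE; apply/negP => /or3P[] /eqP cQ.
  - have := cQ; rewrite (card_idxs hn (QL Q QP)) => /enum2 [a [b [ab mI]]].
    have eQ : Q = [set line a; line b].
      apply/setP => L; rewrite !inE; apply/idP/idP.
        move=> LQ; have [i Li] := in_Lines (subsetP (QL Q QP) L LQ); subst L.
        have : i \in idxs Q by rewrite inI.
        by rewrite mI !inE => /orP[]/eqP->; rewrite eqxx ?orbT.
      by case/orP => /eqP ->; rewrite -inI mI !inE eqxx ?orbT.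
    apply: (Ni Q QP); first by rewrite cQ.
    by rewrite eQ; apply: lift2.
  - case: (eqVneq n 4) => [n4 | n4].
      apply: Nii; have : #|Q| = n.-1 by rewrite cQ n4.
      by case/(n1 Q QP) => l [lL lQ lc]; exists Q, l; split.
    have hn5 : (5 <= n)%N by rewrite ltn_neqAle eq_sym n4 hn.
    have := cQ; rewrite (card_idxs hn (QL Q QP)) => /enum3 [a [b [c [ab ac bc mI]]]].
    have eQ : Q = [set line a; line b; line c].
      apply/setP => L; rewrite !inE; apply/idP/idP.
        move=> LQ; have [i Li] := in_Lines (subsetP (QL Q QP) L LQ); subst L.
        have : i \in idxs Q by rewrite inI.
        by rewrite mI !inE => /or3P[]/eqP->; rewrite eqxx ?orbT.
      by rewrite -orbA; case/or3P => /eqP ->; rewrite -inI mI !inE eqxx ?orbT.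
    apply: (Ni Q QP); first by rewrite cQ.
    by rewrite eQ; apply: lift3.
  - apply: Nii; case/(n1 Q QP): cQ => l [lL lQ lc].
    by exists Q, l; split.
move=> H; split.
  move=> Q QP Q2 lift.
  have := H Q QP; rewrite !inE !negb_or => /and3P[h2 h3 _].
  have Q4 : (4 <= #|Q|)%N.
    rewrite ltn_neqAle eq_sym h3 /= ltn_neqAle eq_sym h2 /=; exact: Q2.
  rewrite (card_idxs hn (QL Q QP)) in Q4.
  have [a [b [c [d [[ab ac ad [bc bd cd]] [aI bI cI dI]]]]]] := enum4 Q4.
  rewrite !inI in aI bI cI dI.
  exact: (notlift ab ac ad bc bd cd aI bI cI dI (QL Q QP) lift).
case=> Q [l [QP lL lQ lc]].
have := H Q QP; rewrite !inE.
have -> : #|Q| = n.-1 by apply/(n1 Q QP); exists l; split.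
by rewrite eqxx !orbT.
Qed.
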